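(* In the setting below with $P=\mathfrak A$ and the absolute error criterion, suppose $\{S_d\}$ is polynomially tractable with constants $C,p>0$, $q\ge0$. Then: (i) for every polynomial $\mathcal P$ with $\mathcal P(d)>0$ for $d\in\mathbb N$, $\lambda_{d,\psi(1)}\,\mathcal P(d)\to0$ as $d\to\infty$ (i.e. $\epsilon_d^{\rm init}$ tends to zero faster than the inverse of any polynomial); (ii) $\lambda\in\ell_\tau$ for every $\tau>p/2$, and for every such $\tau$ and every $\delta>0$ there exists $d_0\in\mathbb N$ with $$\ln\big(\|\lambda\|_{\ell_\tau}^\tau\big)-\delta\le\frac1d\sum_{k=1}^{a_d}\ln\Big(\frac{\|\lambda\|_{\ell_\tau}^\tau}{\lambda_k^\tau}\Big)\quad\text{for all }d\ge d_0;$$ (iii) consequently $\lambda_1<1$ or $\lim_{d\to\infty}a_d=\infty$.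
   Context: Setting: $S_1:H_1\to G_1$ is a compact linear operator between real Hilbert spaces ($H_1$ infinite-dimensional separable); $\lambda=(\lambda_m)_{m\in\mathbb N}$, $\lambda_1\ge\lambda_2\ge\dots\ge0$, are the eigenvalues of $S_1^\dagger S_1$. $S_d=S_1^{\otimes d}:H_1^{\otimes d}\to G_1^{\otimes d}$. For each $d$ fix $\emptyset\ne I_d=\{i_1<\dots<i_{a_d}\}\subset\{1,\dots,d\}$ ($I_1=\{1\}$), put $a_d=\#I_d$, $b_d=d-a_d$, and fix one type $P\in\{\mathfrak S,\mathfrak A\}$ for all $d$; the problem $\{S_d\}$ is the family of restrictions of $S_d$ to the $I_d$-symmetric subspace (if $P=\mathfrak S$) or $I_d$-antisymmetric subspace (if $P=\mathfrak A$) of $H_1^{\otimes d}$, i.e. the range of $\frac1{a_d!}\sum_{\pi}(\pm1)U_\pi$, the sum over permutations $\pi$ of $\{1,\dots,d\}$ fixing all points outside $I_d$, $U_\pi(f_1\otimes\cdots\otimes f_d)=f_{\pi(1)}\otimes\cdots\otimes f_{\pi(d)}$, sign $(-1)^{|\pi|}$ used for $\mathfrak A$. Let $\nabla_d=\{k\in\mathbb N^d:k_{i_1}\le\dots\le k_{i_{a_d}}\}$ for $P=\mathfrak S$ and with strict inequalities for $P=\mathfrak A$; $\lambda_{d,k}=\prod_{l=1}^d\lambda_{k_l}$; $\psi:\mathbb N\to\nabla_d$ a bijection with $\lambda_{d,\psi(1)}\ge\lambda_{d,\psi(2)}\ge\cdots$. These are exactly the eigenvalues of $S_d^\dagger S_d$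 on the subspace, and the information complexity (absolute error) is $n(\epsilon,d)=\#\{k\in\nabla_d:\lambda_{d,k}>\epsilon^2\}$, the initial error $\epsilon^{\rm init}_d=\sqrt{\lambda_{d,\psi(1)}}$ (equal to $\lambda_1^{d/2}$ if $P=\mathfrak S$, and $\sqrt{\lambda_1^{b_d}\lambda_1\lambda_2\cdots\lambda_{a_d}}$ if $P=\mathfrak A$). Polynomially tractable: $\exists C,p>0,q\ge0$ with $n(\epsilon,d)\le C\epsilon^{-p}d^q$ for all $d\in\mathbb N,\epsilon\in(0,1]$; strongly polynomially tractable: this with $q=0$. Standing assumptions: $\lambda_2>0$ and $\epsilon_d^{\rm init}>0$ for all $d$. $\ell_\tau$: sequences with $\|\lambda\|_{\ell_\tau}^\tau=\sum_m\lambda_m^\tau<\infty$. *)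

(* Defs.v *)
From Stdlib Require Import Reals Lra List Sorted Arith.
Import ListNotations.
Open Scope R_scope.

(* Convention: the eigenvalue sequence lambda_1 >= lambda_2 >= ... of the paper
   is represented 0-based: lam i = lambda_{i+1}.  Multi-indices k in N^d are
   lists of length d of 0-based indices; positions 1..d are 0-based too. *)

Definition lam_prod (lam : nat -> R) (k : list nat) : R :=
  fold_right (fun m acc => lam m * acc) 1 k.

(* k in nabla_d for P = antisymmetric type, with I = I_d (list of 0-based
   positions, increasing): k_{i_1} < ... < k_{i_{a_d}} strictly. *)
Definition in_nablaA (d : nat) (I : list nat) (k : list nat) : Prop :=
  length k = d /\ Sorted lt (map (fun i => nth i k 0%nat) I).

Definition fsum (n : nat) (f : nat -> R) : R :=
  fold_right Rplus 0 (map f (seq 0 n)).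

Definition rpow0 (x tau : R) : R :=
  if Rle_dec x 0 then 0 else Rpower x tau.

(* evaluation of a real polynomial given by its coefficient list c_0, c_1, ... *)
Definition poly_eval (c : list R) (x : R) : R :=
  fold_right (fun a acc => a + x * acc) 0 c.

Definition valid_index_sets (I : nat -> list nat) : Prop :=
  I 1%nat = [0%nat] /\
  forall d : nat, (1 <= d)%nat ->
    I d <> [] /\ Sorted lt (I d) /\ (forall i, In i (I d) -> (i < d)%nat).

(* Eigenvalue sequence of S_1^dagger S_1 with S_1 compact, H_1 infinite-dim:
   nonnegative, nonincreasing, tending to zero. *)
Definition eigen_seq (lam : nat -> R) : Prop :=
  (forall m, 0 <= lam m) /\ (forall m, lam (S m) <= lam m) /\ Un_cv lam 0.

(* n(eps,d) <= B : every finite duplicate-free family of indices in nabla_d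
   with lambda_{d,k} > eps^2 has at most B elements. *)
Definition info_complexity_le (lam : nat -> R) (I : nat -> list nat)
  (eps : R) (d : nat) (B : R) : Prop :=
  forall ks : list (list nat), NoDup ks ->
    (forall k, In k ks -> in_nablaA d (I d) k /\ lam_prod lam k > eps ^ 2) ->
    INR (length ks) <= B.

Definition poly_tractable_with (lam : nat -> R) (I : nat -> list nat)
  (C p q : R) : Prop :=
  0 < C /\ 0 < p /\ 0 <= q /\
  forall (d : nat) (eps : R), (1 <= d)%nat -> 0 < eps <= 1 ->
    info_complexity_le lam I eps d (C * Rpower eps (- p) * Rpower (INR d) q).

Definition is_largest_eig (lam : nat -> R) (I : nat -> list nat) (d : nat)
  (mu : R) : Prop :=
  (exists k0, in_nablaA d (I d) k0 /\ lam_prod lam k0 = mu) /\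
  (forall k, in_nablaA d (I d) k -> lam_prod lam k <= mu).

(* Main.v *)
Require Import Defs.
From Stdlib Require Import Reals Lra List Sorted Arith.
From Stdlib Require Import Lia Classical.
Import ListNotations.
Open Scope R_scope.


Definition lsum (l : list R) : R := fold_right Rplus 0 l.
Definition lprod (l : list R) : R := fold_right Rmult 1 l.

Lemma lsum_app l1 l2 : lsum (l1 ++ l2) = lsum l1 + lsum l2.
Proof. induction l1; simpl; [ring| unfold lsum in *; simpl; rewrite IHl1; ring]. Qed.
Lemma lprod_app l1 l2 : lprod (l1 ++ l2) = lprod l1 * lprod l2.
Proof. induction l1; simpl; [ring| unfold lprod in *; simpl; rewrite IHl1; ring]. Qed.
Lemma lam_prod_eq lam k : lam_prod lam k = lprod (map lam k).
Proof. induction k; simpl; auto. unfold lprod in *; simpl; now rewrite IHk. Qed.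

Lemma lprod_nonneg {A} (f : A -> R) l : (forall x, In x l -> 0 <= f x) -> 0 <= lprod (map f l).
Proof. induction l; simpl; intros H; [lra|]. unfold lprod in *; simpl.
  apply Rmult_le_pos; auto. Qed.
Lemma lprod_le {A} (f g : A -> R) l : (forall x, In x l -> 0 <= f x <= g x) ->
  lprod (map f l) <= lprod (map g l).
Proof. induction l; simpl; intros H; [lra|]. unfold lprod in *; simpl.
  apply Rmult_le_compat; try apply H; auto.
  apply lprod_nonneg; intros; apply H; auto. Qed.
Lemma lprod_pos_each {A} (f : A -> R) l : (forall x, In x l -> 0 <= f x) ->
  0 < lprod (map f l) -> forall x, In x l -> 0 < f x.
Proof. induction l; simpl; intros H Hp x Hx; [contradiction|]. unfold lprod in *; simpl in *.
  assert (0 <= f a) by auto. assert (0 <= fold_right Rmult 1 (map f l)) by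
   (apply (lprod_nonneg f l); auto).
  destruct Hx as [<-|Hx].
  - destruct (Req_dec (f a) 0) as [E|E]; [rewrite E in Hp; lra| lra].
  - apply IHl; auto. destruct (Req_dec (fold_right Rmult 1 (map f l)) 0) as [E|E];
      [rewrite E in Hp; lra| lra]. Qed.
Lemma lsum_le {A} (f g : A -> R) l : (forall x, In x l -> f x <= g x) ->
  lsum (map f l) <= lsum (map g l).
Proof. induction l; simpl; intros H; [lra|]. unfold lsum in *; simpl.
  apply Rplus_le_compat; auto. Qed.
Lemma lsum_nonneg {A} (f : A -> R) l : (forall x, In x l -> 0 <= f x) -> 0 <= lsum (map f l).
Proof. induction l; simpl; intros H; [unfold lsum; simpl; lra|]. unfold lsum in *; simpl.
  apply Rplus_le_le_0_compat; auto. Qed.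
Lemma lsum_scal {A} c (f : A -> R) l : lsum (map (fun x => c * f x) l) = c * lsum (map f l).
Proof. induction l; unfold lsum in *; simpl; [ring| rewrite IHl; ring]. Qed.
Lemma lsum_flat {A B} (F : B -> R) (G : A -> list B) L :
  lsum (map F (flat_map G L)) = lsum (map (fun c => lsum (map F (G c))) L).
Proof. induction L; simpl; [reflexivity|]. rewrite map_app, lsum_app, IHL. reflexivity. Qed.

Lemma lam_anti lam : (forall m, lam (S m) <= lam m) -> forall m n, (m <= n)%nat -> lam n <= lam m.
Proof. intros H m n Hmn; induction Hmn; [lra|]. specialize (H m0); lra. Qed.

Lemma nodup_map_inj {A B} (f : A -> B) l : (forall x y, f x = f y -> x = y) -> NoDup l -> NoDup (map f l).
Proof. intros Hf Hl; induction Hl; simpl; constructor; auto.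
  intros Hin; apply in_map_iff in Hin as [y [Hy Hy']]. apply Hf in Hy; subst; auto. Qed.

Lemma map_nth_seq (k : list nat) : map (fun i => nth i k 0%nat) (seq 0 (length k)) = k.
Proof. induction k; simpl; auto. f_equal. rewrite <- seq_shift, map_map. simpl. exact IHk. Qed.

Lemma nth_map_seq (g : nat -> nat) d i : (i < d)%nat -> nth i (map g (seq 0 d)) 0%nat = g i.
Proof. intros H. rewrite nth_indep with (d' := g 0%nat) by (rewrite length_map, length_seq; auto).
  rewrite map_nth, seq_nth; auto. Qed.

Lemma min_exists {A} (f : A -> R) (l : list A) : l <> [] ->
  exists x, In x l /\ forall y, In y l -> f x <= f y.
Proof. induction l as [|a l IH]; intros H; [congruence|].
  destruct l as [|b l'].
  - exists a; split; [left; auto|]. intros y [<-|[]]; lra.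
  - destruct IH as [x [Hx Hm]]; [congruence|].
    destruct (Rle_dec (f a) (f x)).
    + exists a; split; [left; auto|]. intros y [<-|Hy]; [lra|]. specialize (Hm y Hy); lra.
    + exists x; split; [right; auto|]. intros y [<-|Hy]; [lra|]. auto. Qed.

Lemma Un_cv_le u l X : Un_cv u l -> (forall n, u n <= X) -> l <= X.
Proof. intros Hc Hb. destruct (Rle_dec l X) as [|Hn]; auto. exfalso.
  destruct (Hc (l - X)) as [N HN]; [lra|]. specialize (HN N (le_n _)). specialize (Hb N).
  unfold R_dist in HN. apply Rabs_def2 in HN. lra. Qed.

Lemma Un_cv_pow u l b : Un_cv u l -> Un_cv (fun n => u n ^ b) (l ^ b).
Proof. intros H; induction b; simpl.
  - intros e He; exists 0%nat; intros; unfold R_dist; rewrite Rminus_diag, Rabs_R0; auto.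
  - apply CV_mult; auto. Qed.

Lemma ln_le x y : 0 < x -> x <= y -> ln x <= ln y.
Proof. intros. destruct (Req_dec x y); [subst; lra|]. left; apply ln_increasing; lra. Qed.
Lemma exp_le x y : x <= y -> exp x <= exp y.
Proof. intros. destruct (Req_dec x y); [subst; lra|]. left; apply exp_increasing; lra. Qed.
Lemma ln_le_sub1 y : 0 < y -> ln y <= y - 1.
Proof. intros. pose proof (exp_ineq1_le (ln y)). rewrite exp_ln in H0; auto; lra. Qed.
Lemma ln_le_2sqrt x : 1 <= x -> ln x <= 2 * sqrt x.
Proof. intros. assert (0 < sqrt x) by (apply sqrt_lt_R0; lra).
  replace (ln x) with (2 * ln (sqrt x)).
  - pose proof (ln_le_sub1 (sqrt x) H0). lra.
  - rewrite <- (sqrt_sqrt x) at 2 by lra. rewrite ln_mult; auto; ring. Qed.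

Lemma Rpower_pos x y : 0 < Rpower x y.
Proof. unfold Rpower; apply exp_pos. Qed.

Lemma rpow0_pos x t : 0 < x -> rpow0 x t = Rpower x t.
Proof. intros; unfold rpow0; destruct (Rle_dec x 0); [lra|auto]. Qed.
Lemma rpow0_0 x t : x <= 0 -> rpow0 x t = 0.
Proof. intros; unfold rpow0; destruct (Rle_dec x 0); [auto|lra]. Qed.
Lemma rpow0_nonneg x t : 0 <= rpow0 x t.
Proof. unfold rpow0; destruct (Rle_dec x 0); [lra|left; apply Rpower_pos]. Qed.
Lemma rpow0_gt0 x t : 0 < x -> 0 < rpow0 x t.
Proof. intros; rewrite rpow0_pos; auto; apply Rpower_pos. Qed.
Lemma rpow0_mult x y t : 0 <= x -> 0 <= y -> rpow0 (x * y) t = rpow0 x t * rpow0 y t.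
Proof. intros.
  destruct (Req_dec x 0). { subst. rewrite Rmult_0_l, !(rpow0_0 0) by lra. ring. }
  destruct (Req_dec y 0). { subst. rewrite Rmult_0_r, !(rpow0_0 0) by lra. ring. }
  rewrite !rpow0_pos by nra. rewrite Rpower_mult_distr; auto; lra. Qed.
Lemma rpow0_le x y t : 0 <= t -> 0 <= x <= y -> rpow0 x t <= rpow0 y t.
Proof. intros. destruct (Req_dec x 0). { subst; rewrite rpow0_0 by lra; apply rpow0_nonneg. }
  rewrite !rpow0_pos by lra. apply Rle_Rpower_l; lra. Qed.
Lemma rpow0_lt x y t : 0 < t -> 0 <= x < y -> rpow0 x t < rpow0 y t.
Proof. intros. destruct (Req_dec x 0). { subst; rewrite rpow0_0 by lra; apply rpow0_gt0; lra. }
  rewrite !rpow0_pos by lra. apply Rlt_Rpower_l; lra. Qed.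
Lemma rpow0_1 t : rpow0 1 t = 1.
Proof. rewrite rpow0_pos by lra. unfold Rpower. rewrite ln_1, Rmult_0_r, exp_0; auto. Qed.
Lemma rpow0_lprod {A} (f : A -> R) l t : (forall x, In x l -> 0 <= f x) ->
  rpow0 (lprod (map f l)) t = lprod (map (fun x => rpow0 (f x) t) l).
Proof. induction l; intros H; simpl. { apply rpow0_1. }
  change (rpow0 (f a * lprod (map f l)) t = rpow0 (f a) t * lprod (map (fun x => rpow0 (f x) t) l)).
  rewrite rpow0_mult.
  - rewrite IHl; auto; intros; apply H; right; auto.
  - apply H; left; auto.
  - apply (lprod_nonneg f l); intros; apply H; right; auto.
Qed.
Lemma rpow0_pow x n t : 0 <= x -> rpow0 (x ^ n) t = rpow0 x t ^ n.
Proof. intros; induction n; simpl. { apply rpow0_1. }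
  rewrite rpow0_mult; auto. rewrite IHn; auto. apply pow_le; auto. Qed.
Lemma rpow0_lam_prod lam k t : (forall m, 0 <= lam m) ->
  rpow0 (lam_prod lam k) t = lam_prod (fun m => rpow0 (lam m) t) k.
Proof. intros; rewrite !lam_prod_eq. apply rpow0_lprod; auto. Qed.

Lemma Rpower_inv_base x s : 0 < x -> Rpower (/ x) s = Rpower x (- s).
Proof. intros; unfold Rpower. rewrite ln_Rinv; auto. f_equal; ring. Qed.
Lemma Rpower_div x y s : 0 < x -> 0 < y -> Rpower (x / y) s = Rpower x s * Rpower y (- s).
Proof. intros. unfold Rdiv. rewrite <- Rpower_mult_distr; auto.
  - rewrite Rpower_inv_base; auto.
  - apply Rinv_0_lt_compat; auto. Qed.
Lemma ln_Rpower x y : 0 < x -> ln (Rpower x y) = y * ln x.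
Proof. intros; unfold Rpower; rewrite ln_exp; auto. Qed.
Lemma Rpower_1_base y : Rpower 1 y = 1.
Proof. unfold Rpower. rewrite ln_1, Rmult_0_r, exp_0; auto. Qed.
Lemma Rpower_ge1 x y : 1 <= x -> 0 <= y -> 1 <= Rpower x y.
Proof. intros. rewrite <- (Rpower_O x) by lra. apply Rle_Rpower; auto. Qed.

Definition inb (x : nat) (l : list nat) : bool := existsb (Nat.eqb x) l.
Lemma inb_spec x l : inb x l = true <-> In x l.
Proof. unfold inb; rewrite existsb_exists. split.
  - intros [y [Hy E]]. apply Nat.eqb_eq in E; subst; auto.
  - intros H; exists x; split; auto; apply Nat.eqb_refl. Qed.
Lemma inb_false x l : inb x l = false -> ~ In x l.
Proof. intros H Hin. apply inb_spec in Hin; congruence. Qed.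

Fixpoint cnt (l : list nat) (n : nat) : nat :=
  match n with O => O | S n' => (cnt l n' + if inb n' l then 1 else 0)%nat end.

Lemma cnt_le l n : (cnt l n <= n)%nat.
Proof. induction n; simpl; auto. destruct (inb n l); lia. Qed.
Lemma cnt_mono l m n : (m <= n)%nat -> (cnt l m <= cnt l n)%nat.
Proof. intros H; induction H; auto. simpl; lia. Qed.
Lemma cnt_lt l i j : In i l -> (i < j)%nat -> (cnt l i < cnt l j)%nat.
Proof. intros Hi Hij. pose proof (cnt_mono l (S i) j Hij). simpl in H.
  apply inb_spec in Hi; rewrite Hi in H; lia. Qed.
Lemma cnt_cons x l n : ~ In x l -> cnt (x :: l) n = ((if (x <? n)%nat then 1 else 0) + cnt l n)%nat.
Proof. intros Hx; induction n; simpl; auto.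
  rewrite IHn. unfold inb at 1; simpl. fold (inb n l).
  destruct (Nat.eqb_spec n x); destruct (Nat.ltb_spec x n); destruct (Nat.ltb_spec x (S n));
    simpl; try lia; destruct (inb n l) eqn:E; try lia;
    subst; apply inb_spec in E; contradiction. Qed.
Lemma cnt_zero l n : (forall x, In x l -> (n <= x)%nat) -> cnt l n = 0%nat.
Proof. induction n; intros Hl; simpl; auto. rewrite IHn by (intros x Hx; specialize (Hl x Hx); lia).
  destruct (inb n l) eqn:E; auto. apply inb_spec in E; specialize (Hl n E); lia. Qed.
Lemma cnt_full l d : NoDup l -> (forall x, In x l -> (x < d)%nat) -> cnt l d = length l.
Proof. intros Hn; induction Hn as [|x l Hx Hn IHHn]; intros Hb; simpl. { apply cnt_zero; intros x []. }
  rewrite cnt_cons; auto. rewrite IHHn by (intros; apply Hb; right; auto).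
  destruct (Nat.ltb_spec x d); [lia|]. specialize (Hb x (or_introl eq_refl)); lia. Qed.

Lemma lt_trans_rel : Relations_1.Transitive lt.
Proof. intros x y z; lia. Qed.

Lemma cnt_lower_gen (g : nat -> nat) l : StronglySorted lt l -> StronglySorted lt (map g l) ->
  forall m, (forall y, In y l -> (m <= g y)%nat) -> forall y, In y l -> (m + cnt l y <= g y)%nat.
Proof. induction l as [|x l IH]; intros Hs Hm m Hb y Hy; [destruct Hy|].
  inversion Hs as [|? ? Hs' Hf]; subst. simpl in Hm. inversion Hm as [|? ? Hm' Hfm]; subst.
  assert (Hx : ~ In x l). { intros Hin. rewrite Forall_forall in Hf. specialize (Hf x Hin); lia. }
  rewrite cnt_cons; auto.
  destruct Hy as [<-|Hy].
  - rewrite cnt_zero. 2:{ intros z Hz; rewrite Forall_forall in Hf; specialize (Hf z Hz); lia. }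
    destruct (Nat.ltb_spec x x); [lia|]. specialize (Hb x (or_introl eq_refl)); lia.
  - rewrite Forall_forall in Hf. pose proof (Hf y Hy).
    destruct (Nat.ltb_spec x y); [|lia].
    assert (m + 1 + cnt l y <= g y)%nat; [|lia].
    apply IH; auto. intros z Hz. rewrite Forall_forall in Hfm.
    specialize (Hfm (g z) (in_map g l z Hz)). specialize (Hb x (or_introl eq_refl)); lia. Qed.

Lemma cnt_lower (g : nat -> nat) l : Sorted lt l -> Sorted lt (map g l) ->
  forall y, In y l -> (cnt l y <= g y)%nat.
Proof. intros. apply (cnt_lower_gen g l) with (m := 0%nat); auto.
  - apply Sorted_StronglySorted; auto; apply lt_trans_rel.
  - apply Sorted_StronglySorted; auto; apply lt_trans_rel.
  - intros; lia. Qed.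

Lemma ss_nodup l : StronglySorted lt l -> NoDup l.
Proof. induction 1; constructor; auto. intros Hin. rewrite Forall_forall in H0.
  specialize (H0 a Hin); lia. Qed.

Lemma sorted_map_mono (f : nat -> nat) l : StronglySorted lt l ->
  (forall x y, In x l -> In y l -> (x < y)%nat -> (f x < f y)%nat) -> Sorted lt (map f l).
Proof. induction 1 as [|a l Hs IH Hf]; intros Hm; simpl; constructor.
  - apply IH; intros; apply Hm; auto; right; auto.
  - destruct l as [|b l']; simpl; constructor. apply Hm; [left|right;left|]; auto.
    inversion Hf; auto. Qed.

Lemma prod_positions (l : list nat) (h : nat -> R) (c : R) n :
  lprod (map (fun i => if inb i l then h (cnt l i) else c) (seq 0 n)) =
  c ^ (n - cnt l n) * lprod (map h (seq 0 (cnt l n))).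
Proof. induction n. { simpl. unfold lprod; simpl; ring. }
  rewrite seq_S, map_app, lprod_app, IHn. simpl (cnt l (S n)).
  destruct (inb n l) eqn:E.
  - rewrite Nat.add_1_r. rewrite (seq_S (cnt l n)), map_app, lprod_app. simpl.
    replace (S n - S (cnt l n))%nat with (n - cnt l n)%nat by lia. unfold lprod; simpl. rewrite E. ring.
  - rewrite Nat.add_0_r. pose proof (cnt_le l n).
    replace (S n - cnt l n)%nat with (S (n - cnt l n)) by lia. simpl. unfold lprod; simpl. rewrite E. ring.
Qed.

Lemma valid_props I d : valid_index_sets I -> (1 <= d)%nat ->
  Sorted lt (I d) /\ NoDup (I d) /\ (forall i, In i (I d) -> (i < d)%nat) /\ cnt (I d) d = length (I d)
  /\ (length (I d) <= d)%nat.
Proof. intros [_ HI] Hd. destruct (HI d Hd) as [_ [Hs Hr]].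
  assert (NoDup (I d)) by (apply ss_nodup, Sorted_StronglySorted; auto; apply lt_trans_rel).
  assert (E : cnt (I d) d = length (I d)) by (apply cnt_full; auto).
  repeat split; auto. rewrite <- E; apply cnt_le. Qed.

Lemma nabla_crit I d k : valid_index_sets I -> (1 <= d)%nat -> length k = d ->
  (forall i, In i (I d) -> nth i k 0%nat = cnt (I d) i) -> in_nablaA d (I d) k.
Proof. intros HI Hd Hl Hk. destruct (valid_props I d HI Hd) as [Hs [Hn [Hr _]]].
  split; auto. rewrite (map_ext_in _ (cnt (I d))) by auto.
  apply sorted_map_mono. { apply Sorted_StronglySorted; auto; apply lt_trans_rel. }
  intros; apply cnt_lt; auto. Qed.

Definition Amax (lam : nat -> R) a := lprod (map lam (seq 0 a)).
Definition Md (lam : nat -> R) (I : nat -> list nat) d :=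
  lam 0%nat ^ (d - length (I d)) * Amax lam (length (I d)).

Lemma nabla_ub lam I d k : eigen_seq lam -> valid_index_sets I -> (1 <= d)%nat ->
  in_nablaA d (I d) k -> lam_prod lam k <= Md lam I d.
Proof. intros [Hnn [Hdec _]] HI Hd [Hl Hs]. destruct (valid_props I d HI Hd) as [HIs [Hn [Hr [Hc _]]]].
  unfold Md, Amax. rewrite <- Hc, <- prod_positions.
  rewrite lam_prod_eq, <- (map_nth_seq k), map_map, Hl.
  apply lprod_le. intros i Hi. split; auto.
  destruct (inb i (I d)) eqn:E.
  - apply lam_anti; auto. apply inb_spec in E.
    apply (cnt_lower (fun i => nth i k 0%nat)); auto.
  - apply lam_anti; auto; lia. Qed.

Definition kstar (I : nat -> list nat) d :=
  map (fun i => if inb i (I d) then cnt (I d) i else 0%nat) (seq 0 d).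

Lemma kstar_nabla I d : valid_index_sets I -> (1 <= d)%nat -> in_nablaA d (I d) (kstar I d).
Proof. intros HI Hd. destruct (valid_props I d HI Hd) as [HIs [Hn [Hr [Hc _]]]].
  apply nabla_crit; auto. { unfold kstar; rewrite length_map, length_seq; auto. }
  intros i Hi. unfold kstar; rewrite nth_map_seq by auto.
  apply inb_spec in Hi; rewrite Hi; auto. Qed.

Lemma kstar_val lam I d : valid_index_sets I -> (1 <= d)%nat -> lam_prod lam (kstar I d) = Md lam I d.
Proof. intros HI Hd. destruct (valid_props I d HI Hd) as [HIs [Hn [Hr [Hc _]]]].
  unfold Md, Amax. rewrite <- Hc, <- prod_positions.
  rewrite lam_prod_eq. unfold kstar. rewrite map_map. f_equal. apply map_ext. intros i.
  destruct (inb i (I d)); auto. Qed.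

Lemma Md_largest lam I d : eigen_seq lam -> valid_index_sets I -> (1 <= d)%nat ->
  is_largest_eig lam I d (Md lam I d).
Proof. intros. split.
  - exists (kstar I d); split; [apply kstar_nabla|apply kstar_val]; auto.
  - intros; apply nabla_ub; auto. Qed.

Fixpoint fam (ch : nat -> list nat) (i n : nat) : list (list nat) :=
  match n with
  | O => [[]]
  | S n' => flat_map (fun c => map (cons c) (fam ch (S i) n')) (ch i)
  end.

Lemma fam_mem ch n : forall i k, In k (fam ch i n) ->
  length k = n /\ forall l, (l < n)%nat -> In (nth l k 0%nat) (ch (i + l)%nat).
Proof. induction n; intros i k Hk; simpl in Hk.
  - destruct Hk as [<-|[]]; split; auto; intros; lia.
  - apply in_flat_map in Hk as [c [Hc Hk]]. apply in_map_iff in Hk as [k' [<- Hk']].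
    destruct (IHn _ _ Hk') as [Hl Hn]. split; simpl; auto.
    intros [|l] Hlt; simpl. { rewrite Nat.add_0_r; auto. }
    replace (i + S l)%nat with (S i + l)%nat by lia. apply Hn; lia. Qed.

Lemma nodup_flat_cons (L : list nat) (F : list (list nat)) : NoDup L -> NoDup F ->
  NoDup (flat_map (fun c => map (cons c) F) L).
Proof. intros HL HF; induction HL as [|a L Ha HL IH]; simpl; [constructor|].
  apply NoDup_app; auto.
  - apply nodup_map_inj; auto. intros x y E; inversion E; auto.
  - intros k Hk Hk2. apply in_map_iff in Hk as [k' [<- _]].
    apply in_flat_map in Hk2 as [c [Hc Hk2]]. apply in_map_iff in Hk2 as [k'' [E _]].
    inversion E; subst; contradiction. Qed.

Lemma fam_nodup ch n : (forall j, NoDup (ch j)) -> forall i, NoDup (fam ch i n).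
Proof. intros Hch; induction n; intros i; simpl. { constructor; [intros []|constructor]. }
  apply nodup_flat_cons; auto. Qed.

Lemma fam_sum ch (g : nat -> R) n : forall i,
  lsum (map (fun k => lprod (map g k)) (fam ch i n)) =
  lprod (map (fun j => lsum (map g (ch j))) (seq i n)).
Proof. induction n; intros i; simpl. { unfold lsum, lprod; simpl; ring. }
  rewrite lsum_flat.
  transitivity (lsum (map (fun c => g c * lsum (map (fun k => lprod (map g k)) (fam ch (S i) n))) (ch i))).
  - f_equal; apply map_ext; intros c. rewrite map_map. simpl.
    rewrite <- lsum_scal. f_equal.
  - rewrite IHn. unfold lprod at 2; simpl. fold (lprod (map (fun j => lsum (map g (ch j))) (seq (S i) n))).
    transitivity (lsum (map (fun c => lprod (map (fun j : nat => lsum (map g (ch j))) (seq (S i) n)) * g c) (ch i))).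
    + f_equal; apply map_ext; intros; ring.
    + rewrite lsum_scal; ring. Qed.

Lemma count_bound lam I C p q d ks w : poly_tractable_with lam I C p q -> (1 <= d)%nat ->
  0 < w <= 1 -> NoDup ks -> (forall k, In k ks -> in_nablaA d (I d) k /\ w < lam_prod lam k) ->
  INR (length ks) <= C * Rpower w (- (p / 2)) * Rpower (INR d) q.
Proof. intros [HC [Hp [Hq Ht]]] Hd Hw Hn Hk.
  assert (Hs0 : 0 < sqrt w) by (apply sqrt_lt_R0; lra).
  assert (Hs1 : sqrt w <= 1) by (rewrite <- sqrt_1; apply sqrt_le_1; lra).
  assert (E : Rpower (sqrt w) (- p) = Rpower w (- (p / 2))).
  { rewrite <- Rpower_sqrt by lra. rewrite Rpower_mult. f_equal. field. }
  rewrite <- E. apply (Ht d (sqrt w) Hd (conj Hs0 Hs1) ks Hn).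
  intros k Hk'. destruct (Hk k Hk'); split; auto. rewrite pow2_sqrt; lra. Qed.

Lemma elem_bound lam I C p q tau d ks v Mx : poly_tractable_with lam I C p q -> (1 <= d)%nat ->
  p / 2 < tau -> NoDup ks -> (forall k, In k ks -> in_nablaA d (I d) k) -> (1 <= length ks)%nat ->
  0 < v -> v <= Mx -> (forall k, In k ks -> v <= lam_prod lam k) ->
  rpow0 v tau <= Rpower 2 tau * (1 + rpow0 Mx tau) *
     Rpower (C * Rpower (INR d) q / INR (length ks)) (2 * tau / p).
Proof. intros Htr Hd Htau Hn Hk Hl Hv HvM Hvk.
  pose proof Htr as [HC [Hp [Hq _]]].
  set (w := Rmin v 1 / 2).
  assert (Hw : 0 < w <= 1/2) by (unfold w; unfold Rmin; destruct (Rle_dec v 1); lra).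
  assert (Hwv : w < v) by (unfold w; unfold Rmin; destruct (Rle_dec v 1); lra).
  pose proof (count_bound lam I C p q d ks w Htr Hd ltac:(lra) Hn
    ltac:(intros k Hk'; split; auto; specialize (Hvk k Hk'); lra)) as Hc.
  set (D := Rpower (INR d) q) in *. set (n := INR (length ks)) in *.
  assert (Hn1 : 1 <= n) by (unfold n; apply (le_INR 1); auto).
  assert (HD : 0 < D) by apply Rpower_pos.
  assert (Hwp : 0 < Rpower w (p/2)) by apply Rpower_pos.
  rewrite Rpower_Ropp in Hc.
  assert (H1 : Rpower w (p/2) <= C * D / n).
  { apply Rmult_le_reg_r with (r := n / Rpower w (p/2)).
    - apply Rdiv_lt_0_compat; lra.
    - replace (Rpower w (p / 2) * (n / Rpower w (p / 2))) with n by (field; lra).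
      replace (C * D / n * (n / Rpower w (p / 2))) with (C * / Rpower w (p / 2) * D) by (field; lra).
      exact Hc. }
  assert (H2 : Rpower w tau <= Rpower (C * D / n) (2 * tau / p)).
  { replace (Rpower w tau) with (Rpower (Rpower w (p/2)) (2 * tau / p)).
    - apply Rle_Rpower_l; [|lra]. apply Rlt_le, Rdiv_lt_0_compat; lra.
    - rewrite Rpower_mult. f_equal. field. lra. }
  assert (H3 : rpow0 v tau <= Rpower 2 tau * (1 + rpow0 Mx tau) * Rpower w tau).
  { pose proof (rpow0_nonneg Mx tau). pose proof (Rpower_pos 2 tau). pose proof (Rpower_pos w tau).
    unfold w, Rmin in *; destruct (Rle_dec v 1).
    - rewrite rpow0_pos by lra. replace v with (2 * (v / 2)) at 1 by field.
      rewrite <- Rpower_mult_distr by lra. apply Rmult_le_compat_r; [lra|]. pose proof (Rmult_le_pos _ _ (Rlt_le _ _ H0) H). replace (Rpower 2 tau * (1 + rpow0 Mx tau)) with (Rpower 2 tau + Rpower 2 tau * rpow0 Mx tau) by ring. lra.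
    - replace (Rpower 2 tau * (1 + rpow0 Mx tau) * Rpower (1 / 2) tau) with
        ((1 + rpow0 Mx tau) * (Rpower 2 tau * Rpower (1/2) tau)) by ring.
      rewrite Rpower_mult_distr by lra. replace (2 * (1/2)) with 1 by field. rewrite Rpower_1_base.
      pose proof (rpow0_le v Mx tau ltac:(lra) ltac:(lra)). lra. }
  pose proof (rpow0_nonneg Mx tau). pose proof (Rpower_pos 2 tau).
  eapply Rle_trans; [exact H3|]. apply Rmult_le_compat_l; auto. nra. Qed.

Fixpoint Hs (s : R) (n : nat) : R :=
  match n with O => 0 | S m => Hs s m + Rpower (INR (S m)) (- s) end.

Lemma Hs_step s x : 1 < s -> 1 <= x ->
  Rpower (x + 1) (- s) <= (Rpower x (1 - s) - Rpower (x + 1) (1 - s)) / (s - 1).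
Proof. intros Hs Hx. set (y := x + 1).
  assert (Hy : 0 < y) by (unfold y; lra).
  assert (Hln : ln x - ln y <= - / y).
  { replace (ln x - ln y) with (ln (x / y)).
    - pose proof (ln_le_sub1 (x/y) ltac:(apply Rdiv_lt_0_compat; lra)).
      replace (x / y - 1) with (- / y) in H by (unfold y; field; lra). exact H.
    - unfold Rdiv. rewrite ln_mult, ln_Rinv; auto; try lra. apply Rinv_0_lt_compat; lra. }
  unfold Rpower.
  assert (E1 : exp ((1 - s) * ln x) = exp ((1 - s) * ln y) * exp ((1 - s) * (ln x - ln y))).
  { rewrite <- exp_plus. f_equal. ring. }
  assert (E2 : exp (- s * ln y) = exp ((1 - s) * ln y) * / y).
  { replace (/ y) with (exp (- ln y)) by (rewrite exp_Ropp, exp_ln; auto). rewrite <- exp_plus. f_equal. ring. }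
  pose proof (exp_ineq1_le ((1 - s) * (ln x - ln y))).
  assert (1 + (s - 1) / y <= exp ((1 - s) * (ln x - ln y))).
  { eapply Rle_trans; [|exact H]. assert ((s - 1) * / y <= (1 - s) * (ln x - ln y)) by nra.
    unfold Rdiv; lra. }
  rewrite E1, E2. pose proof (exp_pos ((1 - s) * ln y)) as Hp.
  apply Rmult_le_reg_r with (r := s - 1); [lra|].
  replace ((exp ((1 - s) * ln y) * exp ((1 - s) * (ln x - ln y)) - exp ((1 - s) * ln y)) / (s - 1) * (s - 1))
   with (exp ((1 - s) * ln y) * (exp ((1 - s) * (ln x - ln y)) - 1)) by (field; lra).
  replace (exp ((1 - s) * ln y) * / y * (s - 1)) with (exp ((1 - s) * ln y) * ((s - 1) / y)) by (field; lra).
  apply Rmult_le_compat_l; lra. Qed.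

Lemma Hs_bound_gen s n : 1 < s -> (1 <= n)%nat -> Hs s n <= 1 + (1 - Rpower (INR n) (1 - s)) / (s - 1).
Proof. intros Hs1 Hn. induction Hn.
  - simpl. rewrite !Rpower_1_base. unfold Rdiv. lra.
  - change (Hs s (S m)) with (Hs s m + Rpower (INR (S m)) (-s)). rewrite S_INR. pose proof (Hs_step s (INR m) Hs1 ltac:(apply (le_INR 1); auto)).
    rewrite <- S_INR in *. unfold Rdiv in *. lra. Qed.

Lemma Hs_bound s n : 1 < s -> Hs s n <= 1 + / (s - 1).
Proof. intros Hs1. destruct n. { simpl. pose proof (Rinv_0_lt_compat (s - 1)). lra. }
  pose proof (Hs_bound_gen s (S n) Hs1 ltac:(lia)). pose proof (Rpower_pos (INR (S n)) (1 - s)).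
  assert (0 < / (s - 1)) by (apply Rinv_0_lt_compat; lra). unfold Rdiv in H. nra. Qed.

Lemma lam_prod_nonneg lam k : (forall m, 0 <= lam m) -> 0 <= lam_prod lam k.
Proof. intros; rewrite lam_prod_eq; apply lprod_nonneg; auto. Qed.

Lemma sum_bound lam I C p q tau d Mx : eigen_seq lam -> poly_tractable_with lam I C p q ->
  (1 <= d)%nat -> p / 2 < tau ->
  forall n ks, length ks = n -> NoDup ks -> (forall k, In k ks -> in_nablaA d (I d) k) ->
  (forall k, In k ks -> lam_prod lam k <= Mx) ->
  lsum (map (fun k => rpow0 (lam_prod lam k) tau) ks) <=
  Rpower 2 tau * (1 + rpow0 Mx tau) * Rpower (C * Rpower (INR d) q) (2 * tau / p) * Hs (2 * tau / p) n.
Proof. intros Hlam Htr Hd Htau. pose proof Htr as [HC [Hp [Hq _]]].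
  pose proof (rpow0_nonneg Mx tau). pose proof (Rpower_pos 2 tau).
  assert (HCD : 0 < C * Rpower (INR d) q) by (pose proof (Rpower_pos (INR d) q); nra).
  pose proof (Rpower_pos (C * Rpower (INR d) q) (2 * tau / p)).
  induction n; intros ks Hl Hn Hk HM.
  - destruct ks; [|simpl in Hl; lia]. simpl. unfold lsum; simpl. lra.
  - destruct (min_exists (lam_prod lam) ks) as [k0 [Hk0 Hmin]]. { intros E; subst; simpl in Hl; lia. }
    destruct (in_split _ _ Hk0) as [l1 [l2 E]]. subst ks.
    assert (Hl' : length (l1 ++ l2) = n) by (rewrite length_app in *; simpl in Hl; lia).
    specialize (IHn (l1 ++ l2) Hl' (NoDup_remove_1 _ _ _ Hn)
      ltac:(intros k Hk'; apply Hk; apply in_app_or in Hk' as [?|?]; apply in_or_app; [left|right; right]; auto)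
      ltac:(intros k Hk'; apply HM; apply in_app_or in Hk' as [?|?]; apply in_or_app; [left|right; right]; auto)).
    rewrite map_app, lsum_app in *.
    assert (Ec : lsum (map (fun k : list nat => rpow0 (lam_prod lam k) tau) (k0 :: l2)) =
      rpow0 (lam_prod lam k0) tau + lsum (map (fun k : list nat => rpow0 (lam_prod lam k) tau) l2))
      by reflexivity.
    rewrite Ec.
    assert (Hf : rpow0 (lam_prod lam k0) tau <= Rpower 2 tau * (1 + rpow0 Mx tau) *
        Rpower (C * Rpower (INR d) q) (2 * tau / p) * Rpower (INR (S n)) (- (2 * tau / p))).
    { destruct (Req_dec (lam_prod lam k0) 0) as [Z|Z].
      - rewrite Z, rpow0_0 by lra. pose proof (Rpower_pos (INR (S n)) (- (2 * tau / p))).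
        apply Rmult_le_pos; [|lra]. apply Rmult_le_pos; [|lra]. apply Rmult_le_pos; lra.
      - pose proof (lam_prod_nonneg lam k0 (proj1 Hlam)).
        pose proof (elem_bound lam I C p q tau d (l1 ++ k0 :: l2) (lam_prod lam k0) Mx Htr Hd Htau Hn Hk
          ltac:(rewrite Hl; lia) ltac:(lra) (HM k0 Hk0) Hmin) as Hb.
        rewrite Hl, Rpower_div in Hb; auto. 2:{ apply lt_0_INR; lia. }
        rewrite <- Rmult_assoc in Hb. exact Hb. }
    change (Hs (2 * tau / p) (S n)) with (Hs (2 * tau / p) n + Rpower (INR (S n)) (- (2 * tau / p))).
    lra. Qed.

Lemma lsum_seq_sum (f : nat -> R) n : lsum (map f (seq 0 (S n))) = sum_f_R0 f n.
Proof. induction n. { unfold lsum; simpl; ring. }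
  rewrite seq_S, map_app, lsum_app, IHn. simpl. unfold lsum; simpl. ring. Qed.

Lemma summable lam I C p q tau : eigen_seq lam -> valid_index_sets I ->
  poly_tractable_with lam I C p q -> p / 2 < tau -> 0 < lam 1%nat ->
  exists L, Un_cv (sum_f_R0 (fun m => rpow0 (lam m) tau)) L /\
    (forall n, sum_f_R0 (fun m => rpow0 (lam m) tau) n <= L) /\ rpow0 (lam 0%nat) tau < L.
Proof. intros Hlam HI Htr Htau Hl1. pose proof Htr as [HC [Hp [Hq _]]].
  set (f := fun m => rpow0 (lam m) tau).
  assert (Hg : Un_growing (sum_f_R0 f)).
  { intros n. simpl. pose proof (rpow0_nonneg (lam (S n)) tau). unfold f; lra. }
  assert (Hs1 : 1 < 2 * tau / p).
  { apply Rmult_lt_reg_r with p; auto. unfold Rdiv. rewrite Rmult_assoc, Rinv_l; lra. }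
  assert (Hub : has_ub (sum_f_R0 f)).
  { exists (Rpower 2 tau * (1 + rpow0 (lam 0%nat) tau) * Rpower (C * Rpower (INR 1) q) (2 * tau / p)
       * (1 + / (2 * tau / p - 1))).
    intros x [n ->]. rewrite <- lsum_seq_sum.
    set (ks := map (fun m => [m]) (seq 0 (S n))).
    assert (E : lsum (map f (seq 0 (S n))) = lsum (map (fun k => rpow0 (lam_prod lam k) tau) ks)).
    { unfold ks; rewrite map_map. f_equal. apply map_ext; intros m. simpl. rewrite Rmult_1_r; auto. }
    rewrite E.
    eapply Rle_trans.
    - apply (sum_bound lam I C p q tau 1%nat (lam 0%nat) Hlam Htr (le_n 1) Htau (length ks) ks eq_refl).
      + unfold ks; apply nodup_map_inj; [intros x y Exy; inversion Exy; auto| apply seq_NoDup].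
      + intros k Hk. unfold ks in Hk. apply in_map_iff in Hk as [m [<- _]].
        destruct HI as [HI1 _]. rewrite HI1. split; [reflexivity|]. simpl. repeat constructor.
      + intros k Hk. unfold ks in Hk. apply in_map_iff in Hk as [m [<- _]]. simpl.
        rewrite Rmult_1_r. destruct Hlam as [_ [Hd _]]. apply lam_anti; auto; lia.
    - apply Rmult_le_compat_l.
      + pose proof (rpow0_nonneg (lam 0%nat) tau). pose proof (Rpower_pos 2 tau).
        pose proof (Rpower_pos (C * Rpower (INR 1) q) (2 * tau / p)).
        apply Rmult_le_pos; [|lra]. apply Rmult_le_pos; lra.
      + apply Hs_bound; auto. }
  destruct (growing_cv _ Hg Hub) as [L HL].
  exists L. split; auto. split. { apply growing_ineq; auto. }
  pose proof (growing_ineq _ _ Hg HL 1%nat). simpl in H. unfold f in H.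
  pose proof (rpow0_gt0 (lam 1%nat) tau Hl1). lra. Qed.

Lemma prod_decay_gen lam eta t0 : eigen_seq lam -> 0 < eta <= 1 ->
  (forall t, (t0 <= t)%nat -> lam t <= eta) ->
  forall a, Amax lam a <= eta ^ a * Rmax 1 (lam 0%nat / eta) ^ (Nat.min a t0).
Proof. intros [Hnn [Hdec _]] Heta Ht. set (E := Rmax 1 (lam 0%nat / eta)).
  assert (HE : 1 <= E) by apply Rmax_l.
  assert (HE2 : lam 0%nat <= eta * E).
  { assert (H1 : lam 0%nat / eta <= E) by apply Rmax_r.
    assert (Eq : lam 0%nat = eta * (lam 0%nat / eta)) by (field; lra). rewrite Eq at 1.
    apply Rmult_le_compat_l; lra. }
  induction a. { unfold Amax, lprod; simpl. lra. }
  unfold Amax in *. rewrite seq_S, map_app, lprod_app.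
  replace (lprod (map lam [(0 + a)%nat])) with (lam a) by (unfold lprod; simpl; ring).
  change (eta ^ S a) with (eta * eta ^ a). pose proof (Hnn a). pose proof (lprod_nonneg lam (seq 0 a) ltac:(auto)).
  pose proof (pow_le eta a ltac:(lra)).
  destruct (Nat.lt_ge_cases a t0).
  - replace (Nat.min (S a) t0) with (S (Nat.min a t0)) by lia.
    pose proof (lam_anti lam Hdec 0 a ltac:(lia)). change (E ^ S (Nat.min a t0)) with (E * E ^ (Nat.min a t0)).
    pose proof (pow_le E (Nat.min a t0) ltac:(lra)).
    apply Rle_trans with (eta ^ a * E ^ Nat.min a t0 * lam a).
    + apply Rmult_le_compat_r; auto.
    + apply Rle_trans with (eta ^ a * E ^ Nat.min a t0 * (eta * E)).
      * apply Rmult_le_compat_l; [apply Rmult_le_pos|]; lra.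
      * right; ring.
  - replace (Nat.min (S a) t0) with (Nat.min a t0) by lia. specialize (Ht a H2).
    pose proof (pow_le E (Nat.min a t0) ltac:(lra)).
    apply Rle_trans with (eta ^ a * E ^ Nat.min a t0 * lam a).
    + apply Rmult_le_compat_r; auto.
    + apply Rle_trans with (eta ^ a * E ^ Nat.min a t0 * eta).
      * apply Rmult_le_compat_l; [apply Rmult_le_pos|]; lra.
      * right; ring. Qed.

Lemma prod_decay lam eta t0 : eigen_seq lam -> 0 < eta <= 1 ->
  (forall t, (t0 <= t)%nat -> lam t <= eta) ->
  forall a, Amax lam a <= eta ^ a * Rmax 1 (lam 0%nat / eta) ^ t0.
Proof. intros. eapply Rle_trans; [apply prod_decay_gen; eauto|].
  apply Rmult_le_compat_l; [apply pow_le; lra|]. apply Rle_pow; [apply Rmax_l|lia]. Qed.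

Lemma cv_eventually_le lam : eigen_seq lam -> forall eta, 0 < eta -> exists t0, forall t, (t0 <= t)%nat -> lam t <= eta.
Proof. intros [_ [_ Hc]] eta He. destruct (Hc eta He) as [N HN]. exists N. intros t Ht.
  specialize (HN t Ht). unfold R_dist in HN. apply Rabs_def2 in HN. lra. Qed.

Lemma T_step lam I C p q tau L d : eigen_seq lam -> valid_index_sets I ->
  poly_tractable_with lam I C p q -> p / 2 < tau -> (1 <= d)%nat ->
  Un_cv (sum_f_R0 (fun m => rpow0 (lam m) tau)) L ->
  L ^ (d - length (I d)) * rpow0 (Amax lam (length (I d))) tau <=
  Rpower 2 tau * (1 + rpow0 (Md lam I d) tau) * Rpower (C * Rpower (INR d) q) (2 * tau / p)
    * (1 + / (2 * tau / p - 1)).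
Proof. intros Hlam HI Htr Htau Hd HL. pose proof Htr as [HC [Hp [Hq _]]].
  destruct (valid_props I d HI Hd) as [HIs [Hn [Hr [Hc Hle]]]].
  set (g := fun m => rpow0 (lam m) tau).
  set (a := length (I d)) in *.
  assert (Hs1 : 1 < 2 * tau / p).
  { apply Rmult_lt_reg_r with p; auto. unfold Rdiv. rewrite Rmult_assoc, Rinv_l; lra. }
  set (X := Rpower 2 tau * (1 + rpow0 (Md lam I d) tau) * Rpower (C * Rpower (INR d) q) (2 * tau / p)
    * (1 + / (2 * tau / p - 1))).
  apply (Un_cv_le (fun n => sum_f_R0 g n ^ (d - a) * rpow0 (Amax lam a) tau)).
  { apply CV_mult; [apply Un_cv_pow; auto|]. intros e He; exists 0%nat; intros.
    unfold R_dist; rewrite Rminus_diag, Rabs_R0; auto. }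
  intros n.
  set (ch := fun i => if inb i (I d) then [cnt (I d) i] else seq 0 (S n)).
  set (ks := fam ch 0 d).
  assert (Hks : forall k, In k ks -> in_nablaA d (I d) k).
  { intros k Hk. destruct (fam_mem ch d 0 k Hk) as [Hkl Hkn]. apply nabla_crit; auto.
    intros i Hi. specialize (Hkn i (Hr i Hi)). simpl in Hkn. unfold ch in Hkn.
    apply inb_spec in Hi. rewrite Hi in Hkn. destruct Hkn as [E|[]]; auto. }
  assert (Hsum : lsum (map (fun k => rpow0 (lam_prod lam k) tau) ks) =
                 sum_f_R0 g n ^ (d - a) * rpow0 (Amax lam a) tau).
  { transitivity (lsum (map (fun k => lprod (map g k)) ks)).
    { f_equal; apply map_ext; intros k. rewrite rpow0_lam_prod by apply (proj1 Hlam).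
      rewrite lam_prod_eq; auto. }
    unfold ks; rewrite fam_sum.
    rewrite (map_ext _ (fun i => if inb i (I d) then g (cnt (I d) i) else sum_f_R0 g n)).
    - rewrite prod_positions. fold a. rewrite Hc. unfold Amax. rewrite rpow0_lprod by (intros; apply (proj1 Hlam)).
      reflexivity.
    - intros i. unfold ch. destruct (inb i (I d)).
      + unfold lsum; simpl; ring.
      + apply lsum_seq_sum. }
  rewrite <- Hsum.
  eapply Rle_trans.
  - apply (sum_bound lam I C p q tau d (Md lam I d) Hlam Htr Hd Htau (length ks) ks eq_refl).
    + apply fam_nodup. intros j; unfold ch. destruct (inb j (I d)); [repeat constructor; intros []|apply seq_NoDup].
    + exact Hks.
    + intros; apply nabla_ub; auto.
  - unfold X. apply Rmult_le_compat_l.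
    + pose proof (rpow0_nonneg (Md lam I d) tau). pose proof (Rpower_pos 2 tau).
      pose proof (Rpower_pos (C * Rpower (INR d) q) (2 * tau / p)).
      apply Rmult_le_pos; [|lra]. apply Rmult_le_pos; lra.
    + apply Hs_bound; auto. Qed.

Lemma T_alg (T P0 M rho E A1 c1 e1 x : R) (b : nat) :
  0 <= T -> 0 < rho < 1 -> 1 <= E -> 0 <= A1 -> 1 <= x -> 0 < c1 -> 0 <= e1 ->
  P0 = c1 * Rpower x e1 -> T <= P0 * (1 + M) -> M = rho ^ b * T -> M <= E ^ b * A1 ->
  T <= 2 * c1 * (1 + A1 * Rpower (2 * c1) (ln E / - ln rho)) * Rpower x (e1 * (1 + ln E / - ln rho)).
Proof. intros HT Hr HE HA Hx Hc He HP0 HTM HM HME.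
  assert (HlnE : 0 <= ln E) by (rewrite <- ln_1; apply ln_le; lra).
  assert (Hlnr : 0 < - ln rho) by (assert (ln rho < ln 1) by (apply ln_increasing; lra); rewrite ln_1 in H; lra).
  set (g := ln E / - ln rho).
  assert (Hg : 0 <= g) by (unfold g; apply Rmult_le_pos; [lra| left; apply Rinv_0_lt_compat; lra]).
  set (Q := Rpower (2 * c1) g). assert (HQ : 0 < Q) by apply Rpower_pos.
  set (xe1 := Rpower x e1) in *. assert (H1 : 1 <= xe1) by (apply Rpower_ge1; lra).
  set (xe1g := Rpower x (e1 * g)). assert (H2 : 1 <= xe1g) by (apply Rpower_ge1; [lra|]; apply Rmult_le_pos; lra).
  assert (Ex : Rpower x (e1 * (1 + g)) = xe1 * xe1g).
  { unfold xe1, xe1g. rewrite <- Rpower_plus. f_equal; ring. }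
  rewrite Ex. fold Q.
  pose proof (pow_le rho b ltac:(lra)) as Hrb.
  assert (HP : 0 < P0) by (rewrite HP0; apply Rmult_lt_0_compat; lra).
  destruct (Rle_dec (rho ^ b * P0) (1/2)).
  - assert (T <= 2 * P0).
    { rewrite HM in HTM. assert (T <= P0 + (rho ^ b * P0) * T) by (eapply Rle_trans; [exact HTM| right; ring]).
      assert (rho ^ b * P0 * T <= 1/2 * T) by (apply Rmult_le_compat_r; auto). lra. }
    rewrite HP0 in H. fold xe1 in H.
    assert (0 <= A1 * Q) by nra.
    assert (1 <= (1 + A1 * Q) * xe1g) by nra.
    assert (c1 * xe1 * 1 <= c1 * xe1 * ((1 + A1 * Q) * xe1g)) by (apply Rmult_le_compat_l; nra).
    lra.
  - assert (HEb : E ^ b <= Rpower (2 * P0) g).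
    { assert (Hb1 : / (2 * P0) < rho ^ b).
      { apply Rmult_lt_reg_r with (2 * P0); [lra|]. rewrite Rinv_l by lra. lra. }
      assert (Hrb0 : 0 < rho ^ b) by (eapply Rlt_trans; [|exact Hb1]; apply Rinv_0_lt_compat; lra).
      apply ln_increasing in Hb1; [|apply Rinv_0_lt_compat; lra].
      rewrite ln_Rinv, ln_pow in Hb1 by lra.
      assert (Hb2 : INR b <= ln (2 * P0) / - ln rho).
      { apply Rmult_le_reg_r with (- ln rho); auto. unfold Rdiv. rewrite Rmult_assoc, Rinv_l by lra. lra. }
      rewrite <- Rpower_pow by lra. unfold Rpower. apply exp_le.
      unfold g. replace (ln E / - ln rho * ln (2 * P0)) with (ln (2 * P0) / - ln rho * ln E) by (field; lra).
      apply Rmult_le_compat_r; auto. }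
    assert (EQ : Rpower (2 * P0) g = Q * xe1g).
    { rewrite HP0. replace (2 * (c1 * xe1)) with ((2 * c1) * xe1) by ring.
      rewrite <- Rpower_mult_distr by lra. unfold Q, xe1g, xe1. rewrite Rpower_mult. auto. }
    rewrite EQ in HEb.
    assert (M <= Q * xe1g * A1) by (eapply Rle_trans; [exact HME|]; apply Rmult_le_compat_r; auto).
    rewrite HP0 in HTM. fold xe1 in HTM.
    assert (T <= c1 * xe1 * (1 + Q * xe1g * A1)).
    { eapply Rle_trans; [exact HTM|]. apply Rmult_le_compat_l; [nra|lra]. }
    assert (0 <= A1 * Q) by nra.
    assert (c1 * xe1 * (1 + Q * xe1g * A1) <= 2 * c1 * (1 + A1 * Q) * (xe1 * xe1g)).
    { assert (EE : Q * xe1g * A1 = (A1 * Q) * xe1g) by ring. rewrite EE.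
      assert (0 <= A1 * Q * xe1g) by nra.
      assert (c1 * xe1 * (1 + A1 * Q * xe1g) <= c1 * xe1 * ((1 + A1 * Q) * xe1g)) by (apply Rmult_le_compat_l; nra).
      assert (c1 * xe1 * ((1 + A1 * Q) * xe1g) <= 2 * (c1 * xe1 * ((1 + A1 * Q) * xe1g))).
      { assert (0 <= c1 * xe1 * ((1 + A1 * Q) * xe1g)); [|lra].
        apply Rmult_le_pos; [nra|]. apply Rmult_le_pos; lra. }
      lra. }
    lra. Qed.

Lemma T_bound lam I C p q tau L : eigen_seq lam -> valid_index_sets I ->
  poly_tractable_with lam I C p q -> p / 2 < tau -> 0 < lam 1%nat ->
  Un_cv (sum_f_R0 (fun m => rpow0 (lam m) tau)) L -> rpow0 (lam 0%nat) tau < L ->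
  exists c2 e2, 0 < c2 /\ 0 <= e2 /\ forall d, (1 <= d)%nat ->
    L ^ (d - length (I d)) * rpow0 (Amax lam (length (I d))) tau <= c2 * Rpower (INR d) e2.
Proof. intros Hlam HI Htr Htau Hl1 HL HfL. pose proof Htr as [HC [Hp [Hq _]]].
  pose proof Hlam as [Hnn [Hdec _]].
  assert (Hl0 : 0 < lam 0%nat) by (specialize (Hdec 0%nat); lra).
  set (f0 := rpow0 (lam 0%nat) tau) in *.
  assert (Hf0 : 0 < f0) by (apply rpow0_gt0; auto).
  set (rho := f0 / L).
  assert (Hrho : 0 < rho < 1).
  { unfold rho; split; [apply Rdiv_lt_0_compat; lra|].
    apply Rmult_lt_reg_r with L; [lra|]. unfold Rdiv; rewrite Rmult_assoc, Rinv_l; lra. }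
  set (E := Rmax 1 f0). assert (HE : 1 <= E) by apply Rmax_l.
  destruct (cv_eventually_le lam Hlam 1 ltac:(lra)) as [t0 Ht0].
  set (B0 := Rmax 1 (lam 0%nat / 1) ^ t0).
  assert (HA : forall a, 0 <= Amax lam a <= B0).
  { intros a; split; [apply lprod_nonneg; auto|].
    pose proof (prod_decay lam 1 t0 Hlam ltac:(lra) Ht0 a). rewrite pow1, Rmult_1_l in H. exact H. }
  set (A1 := rpow0 B0 tau).
  assert (HA1 : forall a, rpow0 (Amax lam a) tau <= A1) by (intros; apply rpow0_le; [lra|apply HA]).
  assert (HA10 : 0 <= A1) by apply rpow0_nonneg.
  set (s := 2 * tau / p).
  assert (Hs1 : 1 < s).
  { apply Rmult_lt_reg_r with p; auto. unfold s, Rdiv. rewrite Rmult_assoc, Rinv_l; lra. }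
  set (Z := 1 + / (s - 1)). assert (HZ : 0 < Z) by (unfold Z; pose proof (Rinv_0_lt_compat (s - 1)); lra).
  set (c1 := Rpower 2 tau * Rpower C s * Z).
  assert (Hc1 : 0 < c1) by (unfold c1; pose proof (Rpower_pos 2 tau); pose proof (Rpower_pos C s);
    apply Rmult_lt_0_compat; [apply Rmult_lt_0_compat|]; auto).
  set (e1 := q * s). assert (He1 : 0 <= e1) by (unfold e1; nra).
  assert (HlnE : 0 <= ln E) by (rewrite <- ln_1; apply ln_le; lra).
  assert (Hlnr : 0 < - ln rho) by (assert (ln rho < ln 1) by (apply ln_increasing; lra); rewrite ln_1 in H; lra).
  assert (Hg : 0 <= ln E / - ln rho) by (apply Rmult_le_pos; [lra| left; apply Rinv_0_lt_compat; lra]).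
  exists (2 * c1 * (1 + A1 * Rpower (2 * c1) (ln E / - ln rho))), (e1 * (1 + ln E / - ln rho)).
  split; [|split].
  - pose proof (Rpower_pos (2 * c1) (ln E / - ln rho)). assert (0 <= A1 * Rpower (2 * c1) (ln E / - ln rho)) by nra.
    apply Rmult_lt_0_compat; lra.
  - apply Rmult_le_pos; lra.
  - intros d Hd. set (a := length (I d)). set (b := (d - a)%nat).
    pose proof (T_step lam I C p q tau L d Hlam HI Htr Htau Hd HL) as Hst. fold a b s in Hst.
    assert (Hx : 1 <= INR d) by (apply (le_INR 1); auto).
    apply (T_alg _ (c1 * Rpower (INR d) e1) (rpow0 (Md lam I d) tau) rho E A1 c1 e1 (INR d) b);
      auto; try lra.
    + apply Rmult_le_pos; [apply pow_le; lra| apply rpow0_nonneg].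
    + eapply Rle_trans; [exact Hst|]. right.
      replace (Rpower (C * Rpower (INR d) q) s) with (Rpower C s * Rpower (INR d) e1).
      * fold Z. unfold c1. ring.
      * rewrite <- Rpower_mult_distr by (try apply Rpower_pos; lra). unfold e1. rewrite Rpower_mult; auto.
    + unfold Md. fold a b. rewrite rpow0_mult by (try apply pow_le; try apply HA; lra).
      rewrite rpow0_pow by lra. fold f0.
      replace f0 with (rho * L) at 1 by (unfold rho; field; lra). rewrite Rpow_mult_distr. ring.
    + unfold Md. fold a b. rewrite rpow0_mult by (try apply pow_le; try apply HA; lra).
      rewrite rpow0_pow by lra. fold f0. apply Rmult_le_compat.
      * apply pow_le; lra.
      * apply rpow0_nonneg.
      * apply pow_incr. unfold E; split; [lra| apply Rmax_r].
      * apply HA1. Qed.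

Lemma big_sqrt (X : R) : exists N, forall d, (N <= d)%nat -> X <= sqrt (INR d).
Proof. destruct (INR_archimed 1 (X * X) ltac:(lra)) as [n Hn]. exists n. intros d Hd.
  destruct (Rle_dec X 0). { pose proof (sqrt_positivity (INR d) (pos_INR d)); lra. }
  rewrite <- (sqrt_square X) by lra. apply sqrt_le_1; [nra|apply pos_INR|].
  apply le_INR in Hd. lra. Qed.

Lemma loglinear a b dl : 0 <= b -> 0 < dl -> exists N, forall d, (N <= d)%nat -> (1 <= d)%nat ->
  a + b * ln (INR d) <= dl * INR d.
Proof. intros Hb Hd. set (X := (2 * b + Rabs a + 1) / dl + 1).
  destruct (big_sqrt X) as [N HN]. exists N. intros d Hnd H1.
  specialize (HN d Hnd). set (x := INR d) in *. assert (Hx : 1 <= x) by (apply (le_INR 1); auto).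
  pose proof (ln_le_2sqrt x Hx). pose proof (sqrt_sqrt x ltac:(lra)).
  assert (HX : X * dl = 2 * b + Rabs a + 1 + dl) by (unfold X; field; lra).
  assert (0 <= (2 * b + Rabs a + 1) / dl) by (apply Rmult_le_pos; [pose proof (Rabs_pos a); lra| left; apply Rinv_0_lt_compat; lra]).
  assert (1 <= X) by (unfold X; lra).
  assert (dl * x >= dl * X * sqrt x).
  { replace (dl * x) with (dl * (sqrt x * sqrt x)) by (rewrite H0; auto).
    assert (0 <= sqrt x) by (apply sqrt_positivity; lra).
    assert (X * sqrt x <= sqrt x * sqrt x) by (apply Rmult_le_compat_r; lra).
    assert (dl * (X * sqrt x) <= dl * (sqrt x * sqrt x)) by (apply Rmult_le_compat_l; lra).
    rewrite Rmult_assoc. lra. }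
  pose proof (Rle_abs a). assert (1 <= sqrt x) by lra.
  assert (b * ln x <= b * (2 * sqrt x)) by (apply Rmult_le_compat_l; auto).
  assert (Rabs a <= Rabs a * sqrt x) by (pose proof (Rabs_pos a); nra).
  assert (dl * X * sqrt x = (2 * b + Rabs a + 1 + dl) * sqrt x) by (rewrite (Rmult_comm dl X), HX; auto).
  assert (0 <= (1 + dl) * sqrt x) by nra.
  lra. Qed.

Lemma lprod_pos {A} (f : A -> R) l : (forall x, In x l -> 0 < f x) -> 0 < lprod (map f l).
Proof. induction l; intros H. { unfold lprod; simpl; lra. }
  change (0 < f a * lprod (map f l)). apply Rmult_lt_0_compat; [apply H; left; auto|].
  apply IHl; intros; apply H; right; auto. Qed.

Lemma ln_lprod {A} (f : A -> R) l : (forall x, In x l -> 0 < f x) ->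
  ln (lprod (map f l)) = lsum (map (fun x => ln (f x)) l).
Proof. induction l; intros H. { unfold lprod, lsum; simpl; apply ln_1. }
  change (ln (f a * lprod (map f l)) = ln (f a) + lsum (map (fun x => ln (f x)) l)).
  rewrite ln_mult, IHl; auto.
  - intros; apply H; right; auto.
  - apply H; left; auto.
  - apply lprod_pos; intros; apply H; right; auto. Qed.

Lemma Amax_pos lam I d : eigen_seq lam -> valid_index_sets I -> (1 <= d)%nat ->
  (exists k, in_nablaA d (I d) k /\ 0 < lam_prod lam k) -> 0 < Amax lam (length (I d)).
Proof. intros Hlam HI Hd [k [Hk Hp]]. pose proof (nabla_ub lam I d k Hlam HI Hd Hk).
  unfold Md in H. assert (0 <= Amax lam (length (I d))) by (apply lprod_nonneg; intros; apply Hlam).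
  pose proof (pow_le (lam 0%nat) (d - length (I d)) (proj1 Hlam 0%nat)).
  destruct (Req_dec (Amax lam (length (I d))) 0) as [E|E]; [rewrite E in H; lra| lra]. Qed.

Lemma lam_pos_below lam I d : eigen_seq lam -> valid_index_sets I -> (1 <= d)%nat ->
  (exists k, in_nablaA d (I d) k /\ 0 < lam_prod lam k) -> forall t, (t < length (I d))%nat -> 0 < lam t.
Proof. intros. pose proof (Amax_pos lam I d H H0 H1 H2). unfold Amax in H4.
  apply (lprod_pos_each lam (seq 0 (length (I d)))); auto.
  - intros; apply H.
  - apply in_seq; lia. Qed.

Lemma lsum_sub_const (c : R) (g : nat -> R) l :
  lsum (map (fun t => c - g t) l) = INR (length l) * c - lsum (map g l).
Proof. induction l. { unfold lsum; simpl; ring. }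
  change (c - g a + lsum (map (fun t => c - g t) l) = INR (length (a :: l)) * c - (g a + lsum (map g l))).
  rewrite IHl. simpl length. rewrite S_INR. ring. Qed.

Lemma part_ii lam I C p q : eigen_seq lam -> valid_index_sets I -> poly_tractable_with lam I C p q ->
  0 < lam 1%nat ->
  (forall d : nat, (1 <= d)%nat -> exists k, in_nablaA d (I d) k /\ 0 < lam_prod lam k) ->
  forall tau : R, p / 2 < tau ->
     exists L : R,
       infinite_sum (fun m => rpow0 (lam m) tau) L /\
       forall delta : R, 0 < delta ->
         exists d0 : nat, (1 <= d0)%nat /\
           forall d : nat, (d0 <= d)%nat ->
             ln L - delta <=
             / INR d * fsum (length (I d)) (fun k => ln (L / rpow0 (lam k) tau)).
Proof. intros Hlam HI Htr Hl1 Hinit tau Htau.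
  destruct (summable lam I C p q tau Hlam HI Htr Htau Hl1) as [L [HL [Hle HfL]]].
  exists L. split. { exact HL. }
  assert (HL0 : 0 < L) by (pose proof (rpow0_nonneg (lam 0%nat) tau); lra).
  destruct (T_bound lam I C p q tau L Hlam HI Htr Htau Hl1 HL HfL) as [c2 [e2 [Hc2 [He2 HT]]]].
  intros dl Hdl.
  destruct (loglinear (ln c2) e2 dl He2 Hdl) as [N HN].
  exists (Nat.max N 1). split; [lia|]. intros d Hd.
  assert (Hd1 : (1 <= d)%nat) by lia.
  destruct (valid_props I d HI Hd1) as [_ [_ [_ [_ Hale]]]].
  set (a := length (I d)) in *.
  assert (Hpos : forall t, (t < a)%nat -> 0 < lam t) by (apply (lam_pos_below lam I d); auto).
  assert (HA : 0 < Amax lam a) by (apply Amax_pos; auto).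
  set (Td := L ^ (d - a) * rpow0 (Amax lam a) tau).
  assert (HTd : 0 < Td) by (apply Rmult_lt_0_compat; [apply pow_lt; auto| apply rpow0_gt0; auto]).
  assert (Hx : 1 <= INR d) by (apply (le_INR 1); auto).
  assert (H1 : ln Td <= ln c2 + e2 * ln (INR d)).
  { rewrite <- ln_Rpower by lra. rewrite <- ln_mult by (try apply Rpower_pos; lra).
    apply ln_le; auto. apply HT; auto. }
  set (S := lsum (map (fun t => ln (rpow0 (lam t) tau)) (seq 0 a))).
  assert (H2 : ln Td = INR (d - a) * ln L + S).
  { unfold Td. rewrite ln_mult, ln_pow by (try apply pow_lt; try apply rpow0_gt0; auto).
    f_equal. unfold Amax. rewrite rpow0_lprod by (intros; apply Hlam).
    rewrite ln_lprod; auto. intros t Ht. apply in_seq in Ht. apply rpow0_gt0, Hpos; lia. }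
  assert (H3 : fsum a (fun k => ln (L / rpow0 (lam k) tau)) = INR a * ln L - S).
  { unfold fsum. change (lsum (map (fun k => ln (L / rpow0 (lam k) tau)) (seq 0 a)) = INR a * ln L - S).
    rewrite (map_ext_in _ (fun t => ln L - ln (rpow0 (lam t) tau))).
    - rewrite lsum_sub_const, length_seq; auto.
    - intros t Ht. apply in_seq in Ht. assert (0 < rpow0 (lam t) tau) by (apply rpow0_gt0, Hpos; lia).
      unfold Rdiv. rewrite ln_mult, ln_Rinv; auto. apply Rinv_0_lt_compat; auto. }
  rewrite H3. rewrite minus_INR in H2 by lia.
  specialize (HN d ltac:(lia) Hd1).
  assert (H4 : INR d * (ln L - dl) <= INR a * ln L - S) by lra.
  apply Rmult_le_reg_l with (INR d); [lra|].
  rewrite <- Rmult_assoc, Rinv_r, Rmult_1_l by lra. exact H4. Qed.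

Lemma pow_anti x m n : 0 <= x <= 1 -> (m <= n)%nat -> x ^ n <= x ^ m.
Proof. intros Hx Hmn. replace n with (m + (n - m))%nat by lia. rewrite pow_add.
  pose proof (pow_le x m (proj1 Hx)). pose proof (pow_le x (n - m) (proj1 Hx)).
  assert (x ^ (n - m) <= 1) by (rewrite <- (pow1 (n - m)); apply pow_incr; lra). nra. Qed.

Lemma decay K th e eps : 0 <= K -> 0 < th < 1 -> 0 <= e -> 0 < eps ->
  exists N, forall d, (N <= d)%nat -> (1 <= d)%nat -> K * th ^ d * Rpower (INR d) e < eps.
Proof. intros HK Hth He Heps.
  set (c := - ln th).
  assert (Hc : 0 < c) by (unfold c; assert (ln th < ln 1) by (apply ln_increasing; lra); rewrite ln_1 in H; lra).
  destruct (big_sqrt (4 * e / c)) as [N1 HN1].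
  destruct (INR_archimed 1 (2 * K / (c * eps)) ltac:(lra)) as [N2 HN2].
  exists (Nat.max N1 N2). intros d Hd H1.
  set (x := INR d). assert (Hx : 1 <= x) by (apply (le_INR 1); auto).
  assert (Hx2 : 2 * K / (c * eps) < x).
  { assert (HN : (N2 <= d)%nat) by lia. apply le_INR in HN. unfold x; lra. }
  specialize (HN1 d ltac:(lia)). fold x in HN1.
  assert (Hr : 0 < sqrt x) by (apply sqrt_lt_R0; lra).
  assert (E1 : th ^ d * Rpower x e = exp (- c * x + e * ln x)).
  { rewrite <- Rpower_pow by lra. unfold Rpower, c, x. rewrite exp_plus. f_equal. f_equal. ring. }
  assert (E2 : - c * x + e * ln x <= - (c * x / 2)).
  { pose proof (ln_le_2sqrt x Hx) as A1. pose proof (sqrt_sqrt x ltac:(lra)) as A2.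
    assert (A3 : e * ln x <= e * (2 * sqrt x)) by (apply Rmult_le_compat_l; auto).
    assert (A4 : 4 * e / c * sqrt x <= sqrt x * sqrt x) by (apply Rmult_le_compat_r; lra).
    assert (A5 : c * (4 * e / c * sqrt x) = 4 * e * sqrt x) by (field; lra).
    assert (A6 : c * (4 * e / c * sqrt x) <= c * (sqrt x * sqrt x)) by (apply Rmult_le_compat_l; lra).
    rewrite A2, A5 in A6. lra. }
  assert (E3 : exp (- (c * x / 2)) <= / (1 + c * x / 2)).
  { rewrite exp_Ropp. apply Rinv_le_contravar. { nra. } apply exp_ineq1_le. }
  assert (th ^ d * Rpower x e <= / (1 + c * x / 2)).
  { rewrite E1. eapply Rle_trans; [apply exp_le, E2|exact E3]. }
  assert (K * (th ^ d * Rpower x e) <= K * / (1 + c * x / 2)) by (apply Rmult_le_compat_l; auto).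
  assert (K * / (1 + c * x / 2) < eps).
  { apply Rmult_lt_reg_r with (1 + c * x / 2); [nra|]. rewrite Rmult_assoc, Rinv_l by nra.
    assert (2 * K < c * eps * x).
    { apply Rmult_lt_reg_r with (/ (c * eps)). { apply Rinv_0_lt_compat; nra. }
      replace (c * eps * x * / (c * eps)) with x by (field; lra). unfold Rdiv in Hx2. lra. }
    nra. }
  rewrite Rmult_assoc. lra. Qed.

Lemma poly_bound (c : list R) x : 1 <= x -> Rabs (poly_eval c x) <= lsum (map Rabs c) * x ^ length c.
Proof. intros Hx. induction c. { simpl. rewrite Rabs_R0. unfold lsum; simpl; lra. }
  change (Rabs (a + x * poly_eval c x) <= (Rabs a + lsum (map Rabs c)) * (x * x ^ length c)).
  eapply Rle_trans; [apply Rabs_triang|]. rewrite Rabs_mult, (Rabs_right x) by lra.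
  pose proof (lsum_nonneg Rabs c (fun y _ => Rabs_pos y)).
  assert (1 <= x ^ length c) by (rewrite <- (pow1 (length c)); apply pow_incr; lra).
  assert (x * Rabs (poly_eval c x) <= x * (lsum (map Rabs c) * x ^ length c)) by (apply Rmult_le_compat_l; lra).
  pose proof (Rabs_pos a).
  assert (Rabs a <= Rabs a * (x * x ^ length c)) by (assert (1 <= x * x ^ length c) by nra; nra).
  nra. Qed.

Lemma Md_rpow lam I d tau : eigen_seq lam ->
  rpow0 (Md lam I d) tau = rpow0 (lam 0%nat) tau ^ (d - length (I d)) * rpow0 (Amax lam (length (I d))) tau.
Proof. intros Hlam. unfold Md. rewrite rpow0_mult.
  - rewrite rpow0_pow; auto. apply Hlam.
  - apply pow_le, Hlam.
  - apply lprod_nonneg; intros; apply Hlam. Qed.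

Lemma Md_decay lam I C p q : eigen_seq lam -> valid_index_sets I -> poly_tractable_with lam I C p q ->
  0 < lam 1%nat ->
  exists K th e, 0 <= K /\ 0 < th < 1 /\ 0 <= e /\
    forall d, (1 <= d)%nat -> rpow0 (Md lam I d) p <= K * th ^ d * Rpower (INR d) e.
Proof. intros Hlam HI Htr Hl1. pose proof Htr as [HC [Hp [Hq _]]].
  pose proof Hlam as [Hnn [Hdec _]].
  assert (Htau : p / 2 < p) by lra.
  destruct (summable lam I C p q p Hlam HI Htr Htau Hl1) as [L [HL [Hle HfL]]].
  destruct (T_bound lam I C p q p L Hlam HI Htr Htau Hl1 HL HfL) as [c2 [e2 [Hc2 [He2 HT]]]].
  assert (Hl0 : 0 < lam 0%nat) by (specialize (Hdec 0%nat); lra).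
  set (f0 := rpow0 (lam 0%nat) p) in *.
  assert (Hf0 : 0 < f0) by (apply rpow0_gt0; auto).
  set (rho := f0 / L).
  assert (Hrho : 0 < rho < 1).
  { unfold rho; split; [apply Rdiv_lt_0_compat; lra|].
    apply Rmult_lt_reg_r with L; [lra|]. unfold Rdiv; rewrite Rmult_assoc, Rinv_l; lra. }
  set (th1 := sqrt rho).
  assert (Hth1 : 0 < th1 < 1).
  { unfold th1; split; [apply sqrt_lt_R0; lra|]. rewrite <- sqrt_1. apply sqrt_lt_1; lra. }
  assert (Eth1 : th1 * th1 = rho) by (apply sqrt_sqrt; lra).
  set (E0 := Rmax 1 (lam 0%nat)). assert (HE0 : 1 <= E0) by apply Rmax_l.
  set (eta1 := / (2 * E0)).
  assert (Heta1 : 0 < eta1 <= 1 / 2).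
  { unfold eta1; split; [apply Rinv_0_lt_compat; lra|].
    apply Rmult_le_reg_l with (2 * E0); [lra|]. rewrite Rinv_r by lra. lra. }
  set (eta := eta1 * eta1).
  destruct (cv_eventually_le lam Hlam eta ltac:(unfold eta; nra)) as [t0 Ht0].
  set (B0 := Rmax 1 (lam 0%nat / eta) ^ t0).
  assert (HB0 : 0 <= B0) by (apply pow_le; pose proof (Rmax_l 1 (lam 0%nat / eta)); lra).
  assert (HA : forall a, Amax lam a <= eta ^ a * B0) by (intros; apply prod_decay; auto; unfold eta; nra).
  set (h := rpow0 (/ 2) p).
  assert (Hh : 0 < h < 1).
  { unfold h; split; [apply rpow0_gt0; lra|]. rewrite <- (rpow0_1 p). apply rpow0_lt; lra. }
  exists (Rmax c2 (rpow0 B0 p)), (Rmax th1 h), e2.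
  split; [pose proof (Rmax_l c2 (rpow0 B0 p)); lra|].
  split; [unfold Rmax; destruct (Rle_dec th1 h); lra|].
  split; auto.
  intros d Hd.
  destruct (valid_props I d HI Hd) as [_ [_ [_ [_ Hale]]]].
  set (a := length (I d)) in *. set (b := (d - a)%nat).
  assert (Hx : 1 <= INR d) by (apply (le_INR 1); auto).
  assert (Hxe : 1 <= Rpower (INR d) e2) by (apply Rpower_ge1; lra).
  assert (Hth : th1 <= Rmax th1 h /\ h <= Rmax th1 h) by (split; [apply Rmax_l|apply Rmax_r]).
  assert (HK : c2 <= Rmax c2 (rpow0 B0 p) /\ rpow0 B0 p <= Rmax c2 (rpow0 B0 p)) by (split; [apply Rmax_l|apply Rmax_r]).
  pose proof (pow_le (Rmax th1 h) d ltac:(lra)) as Hthd.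
  destruct (le_lt_dec d (2 * b)) as [Hb|Hb].
  - (* many free positions *)
    assert (E : rpow0 (Md lam I d) p = rho ^ b * (L ^ b * rpow0 (Amax lam a) p)).
    { rewrite Md_rpow by auto. fold a b f0. replace f0 with (rho * L) at 1 by (unfold rho; field; lra).
      rewrite Rpow_mult_distr. ring. }
    rewrite E. specialize (HT d Hd). fold a b in HT.
    assert (Hrb : rho ^ b <= Rmax th1 h ^ d).
    { rewrite <- Eth1, Rpow_mult_distr. rewrite <- pow_add.
      eapply Rle_trans; [apply pow_anti; [lra| replace (b + b)%nat with (2 * b)%nat by lia; exact Hb]|].
      apply pow_incr; lra. }
    assert (0 <= L ^ b * rpow0 (Amax lam a) p) by (apply Rmult_le_pos; [apply pow_le; lra| apply rpow0_nonneg]).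
    pose proof (pow_le rho b ltac:(lra)).
    apply Rle_trans with (Rmax th1 h ^ d * (c2 * Rpower (INR d) e2)).
    + apply Rmult_le_compat; auto.
    + assert (Rmax th1 h ^ d * c2 <= Rmax th1 h ^ d * Rmax c2 (rpow0 B0 p)) by (apply Rmult_le_compat_l; lra).
      assert (0 <= Rpower (INR d) e2) by lra.
      replace (Rmax th1 h ^ d * (c2 * Rpower (INR d) e2)) with (Rmax th1 h ^ d * c2 * Rpower (INR d) e2) by ring.
      replace (Rmax c2 (rpow0 B0 p) * Rmax th1 h ^ d * Rpower (INR d) e2) with
        (Rmax th1 h ^ d * Rmax c2 (rpow0 B0 p) * Rpower (INR d) e2) by ring.
      apply Rmult_le_compat_r; auto.
  - (* many antisymmetric positions *)
    assert (HM : Md lam I d <= (/ 2) ^ d * B0).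
    { unfold Md. fold a b.
      assert (lam 0%nat ^ b <= E0 ^ d).
      { eapply Rle_trans; [apply pow_incr; split; [lra|apply Rmax_r]|]. apply Rle_pow; auto; lia. }
      assert (eta ^ a <= eta1 ^ d).
      { unfold eta. rewrite Rpow_mult_distr, <- pow_add. apply pow_anti; [lra|lia]. }
      assert (E0 ^ d * eta1 ^ d = (/ 2) ^ d).
      { rewrite <- Rpow_mult_distr. f_equal. unfold eta1. field. lra. }
      pose proof (pow_le (lam 0%nat) b (Hnn 0%nat)). pose proof (pow_le eta a ltac:(unfold eta; nra)).
      assert (0 <= Amax lam a) by (apply lprod_nonneg; auto).
      apply Rle_trans with (lam 0%nat ^ b * (eta ^ a * B0)).
      { apply Rmult_le_compat_l; auto. }
      apply Rle_trans with (E0 ^ d * (eta1 ^ d * B0)).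
      { apply Rmult_le_compat; auto. { apply Rmult_le_pos; auto. }
        apply Rmult_le_compat_r; auto. }
      rewrite <- H1. right; ring. }
    assert (H0M : 0 <= Md lam I d) by (unfold Md; apply Rmult_le_pos; [apply pow_le; lra| apply lprod_nonneg; auto]).
    eapply Rle_trans; [apply rpow0_le; [lra| split; [exact H0M| exact HM]]|].
    rewrite rpow0_mult; [|apply pow_le; lra|exact HB0]. rewrite rpow0_pow by lra. fold h.
    pose proof (pow_le h d ltac:(lra)). pose proof (rpow0_nonneg B0 p).
    assert (h ^ d <= Rmax th1 h ^ d) by (apply pow_incr; lra).
    apply Rle_trans with (Rmax th1 h ^ d * Rmax c2 (rpow0 B0 p)).
    { apply Rmult_le_compat; auto; lra. }
    assert (0 <= Rmax th1 h ^ d * Rmax c2 (rpow0 B0 p)) by (apply Rmult_le_pos; lra).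
    replace (Rmax c2 (rpow0 B0 p) * Rmax th1 h ^ d * Rpower (INR d) e2) with
      (Rmax th1 h ^ d * Rmax c2 (rpow0 B0 p) * Rpower (INR d) e2) by ring.
    nra. Qed.

Lemma part_i lam I C p q : eigen_seq lam -> valid_index_sets I -> poly_tractable_with lam I C p q ->
  0 < lam 1%nat ->
  forall (P : list R) (mu : nat -> R),
     (forall d : nat, (1 <= d)%nat -> 0 < poly_eval P (INR d)) ->
     (forall d : nat, (1 <= d)%nat -> is_largest_eig lam I d (mu d)) ->
     Un_cv (fun d => mu d * poly_eval P (INR d)) 0.
Proof. intros Hlam HI Htr Hl1 P mu HP Hmu. pose proof Htr as [HC [Hp [Hq _]]].
  destruct (Md_decay lam I C p q Hlam HI Htr Hl1) as [K [th [e [HK [Hth [He HM]]]]]].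
  set (KP := lsum (map Rabs P)). set (np := length P).
  assert (HKP : 0 <= KP) by (apply lsum_nonneg; intros; apply Rabs_pos).
  intros eps Heps.
  pose proof (rpow0_nonneg KP p).
  destruct (decay (K * rpow0 KP p) th (e + p * INR np) (rpow0 eps p)
    ltac:(apply Rmult_le_pos; auto) Hth ltac:(pose proof (pos_INR np); nra) ltac:(apply rpow0_gt0; auto))
    as [N HN].
  exists (Nat.max N 1). intros d Hd. assert (Hd1 : (1 <= d)%nat) by lia.
  destruct (Hmu d Hd1) as [[k0 [Hk0 Ek0]] _].
  assert (Hmu0 : 0 <= mu d) by (rewrite <- Ek0; apply lam_prod_nonneg, Hlam).
  assert (HmuM : mu d <= Md lam I d) by (rewrite <- Ek0; apply nabla_ub; auto).
  assert (Hx : 1 <= INR d) by (apply (le_INR 1); auto).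
  pose proof (poly_bound P (INR d) Hx) as HPb. fold KP np in HPb.
  assert (Hxn : 0 <= INR d ^ np) by (apply pow_le; lra).
  set (Y := Md lam I d * KP * INR d ^ np).
  assert (HY0 : 0 <= Md lam I d) by lra.
  assert (Hu : Rabs (mu d * poly_eval P (INR d)) <= Y).
  { rewrite Rabs_mult, (Rabs_right (mu d)) by lra. unfold Y. rewrite Rmult_assoc.
    apply Rmult_le_compat; auto; apply Rabs_pos. }
  assert (HrY : rpow0 Y p <= K * rpow0 KP p * th ^ d * Rpower (INR d) (e + p * INR np)).
  { unfold Y. rewrite !rpow0_mult; auto; try (apply Rmult_le_pos; auto).
    rewrite rpow0_pow by lra. rewrite (rpow0_pos (INR d)) by lra.
    rewrite <- Rpower_pow by apply Rpower_pos. rewrite Rpower_mult, Rpower_plus.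
    specialize (HM d Hd1).
    pose proof (Rpower_pos (INR d) (p * INR np)).
    apply Rle_trans with (K * th ^ d * Rpower (INR d) e * rpow0 KP p * Rpower (INR d) (p * INR np)).
    - apply Rmult_le_compat_r; [lra|]. apply Rmult_le_compat_r; auto.
    - right; ring. }
  specialize (HN d ltac:(lia) Hd1).
  assert (HYe : Y < eps).
  { destruct (Rlt_dec Y eps); auto. exfalso.
    assert (rpow0 eps p <= rpow0 Y p) by (apply rpow0_le; lra). lra. }
  unfold R_dist. rewrite Rminus_0_r. lra. Qed.

Lemma lprod_le1 {A} (f : A -> R) l : (forall x, In x l -> 0 <= f x <= 1) -> lprod (map f l) <= 1.
Proof. induction l; intros H. { unfold lprod; simpl; lra. }
  change (f a * lprod (map f l) <= 1).
  pose proof (H a (or_introl eq_refl)). pose proof (IHl ltac:(intros; apply H; right; auto)).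
  pose proof (lprod_nonneg f l ltac:(intros; apply H; right; auto)). nra. Qed.

Lemma part_iii lam I C p q : eigen_seq lam -> valid_index_sets I -> poly_tractable_with lam I C p q ->
  0 < lam 1%nat ->
  (forall d : nat, (1 <= d)%nat -> exists k, in_nablaA d (I d) k /\ 0 < lam_prod lam k) ->
  (lam 0%nat < 1 \/
   forall M : nat, exists d0 : nat, forall d : nat, (d0 <= d)%nat -> (M <= length (I d))%nat).
Proof. intros Hlam HI Htr Hl1 Hinit.
  destruct (Rlt_dec (lam 0%nat) 1) as [|Hge]; [left; auto|right].
  intros M. apply NNPP. intros Hn.
  set (lam' := fun t => if Rlt_dec 0 (lam t) then Rmin (lam t) 1 else 1).
  assert (Hl' : forall t, 0 < lam' t <= 1).
  { intros t; unfold lam'; destruct (Rlt_dec 0 (lam t)); [|lra].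
    unfold Rmin; destruct (Rle_dec (lam t) 1); lra. }
  set (m := lprod (map lam' (seq 0 M))).
  assert (Hm : 0 < m) by (apply lprod_pos; intros; apply Hl').
  pose proof (part_i lam I C p q Hlam HI Htr Hl1 [1] (Md lam I)
     ltac:(intros; simpl; lra) ltac:(intros; apply Md_largest; auto)) as Hcv.
  destruct (Hcv m Hm) as [N HN].
  assert (Hex : exists d, (Nat.max N 1 <= d)%nat /\ (length (I d) < M)%nat).
  { apply NNPP. intros Hne. apply Hn. exists (Nat.max N 1). intros d Hd.
    destruct (le_lt_dec M (length (I d))); auto. exfalso. apply Hne. exists d; auto. }
  destruct Hex as [d [Hd Ha]]. assert (Hd1 : (1 <= d)%nat) by lia.
  specialize (HN d ltac:(lia)). unfold R_dist in HN. simpl in HN.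
  rewrite Rmult_0_r, Rplus_0_r, Rmult_1_r, Rminus_0_r in HN.
  set (a := length (I d)) in *.
  assert (Hpos : forall t, (t < a)%nat -> 0 < lam t) by (apply (lam_pos_below lam I d); auto).
  assert (H1 : m <= Amax lam a).
  { unfold m, Amax. replace M with (a + (M - a))%nat by lia. rewrite seq_app, map_app, lprod_app.
    assert (lprod (map lam' (seq 0 a)) <= lprod (map lam (seq 0 a))).
    { apply lprod_le. intros t Ht. apply in_seq in Ht. pose proof (Hpos t ltac:(lia)).
      unfold lam'. destruct (Rlt_dec 0 (lam t)); [|lra]. split; [|apply Rmin_l].
      unfold Rmin; destruct (Rle_dec (lam t) 1); lra. }
    assert (lprod (map lam' (seq (0 + a) (M - a))) <= 1) by (apply lprod_le1; intros; pose proof (Hl' x); lra).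
    assert (0 <= lprod (map lam' (seq (0 + a) (M - a)))) by (apply lprod_nonneg; intros; pose proof (Hl' x); lra).
    assert (0 <= lprod (map lam' (seq 0 a))) by (apply lprod_nonneg; intros; pose proof (Hl' x); lra).
    nra. }
  assert (H2 : Amax lam a <= Md lam I d).
  { unfold Md. fold a. assert (1 <= lam 0%nat ^ (d - a)) by (rewrite <- (pow_O (lam 0%nat)); apply Rle_pow; lra || lia).
    assert (0 <= Amax lam a) by (apply lprod_nonneg; intros; apply Hlam). nra. }
  assert (0 <= Md lam I d) by lra. rewrite Rabs_right in HN; lra. Qed.

Theorem proposition7 (lam : nat -> R) (I : nat -> list nat) (C p q : R)
  (Hlam : eigen_seq lam)
  (HI : valid_index_sets I)
  (Hlam2 : 0 < lam 1%nat)
  (Hinit : forall d : nat, (1 <= d)%nat ->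
     exists k, in_nablaA d (I d) k /\ 0 < lam_prod lam k)
  (Htract : poly_tractable_with lam I C p q) :
  (* (i) *)
  (forall (P : list R) (mu : nat -> R),
     (forall d : nat, (1 <= d)%nat -> 0 < poly_eval P (INR d)) ->
     (forall d : nat, (1 <= d)%nat -> is_largest_eig lam I d (mu d)) ->
     Un_cv (fun d => mu d * poly_eval P (INR d)) 0) /\
  (* (ii) *)
  (forall tau : R, p / 2 < tau ->
     exists L : R,
       infinite_sum (fun m => rpow0 (lam m) tau) L /\
       forall delta : R, 0 < delta ->
         exists d0 : nat, (1 <= d0)%nat /\
           forall d : nat, (d0 <= d)%nat ->
             ln L - delta <=
             / INR d * fsum (length (I d)) (fun k => ln (L / rpow0 (lam k) tau))) /\
  (* (iii) *)
  (lam 0%nat < 1 \/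
   forall M : nat, exists d0 : nat, forall d : nat, (d0 <= d)%nat ->
     (M <= length (I d))%nat).
Proof.
  split; [|split].
  - exact (part_i lam I C p q Hlam HI Htract Hlam2).
  - exact (part_ii lam I C p q Hlam HI Htract Hlam2 Hinit).
  - exact (part_iii lam I C p q Hlam HI Htract Hlam2 Hinit).
Qed.
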